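(* Let $G$ be a nilpotent group such that $G/Z(G)$ contains a nontrivial divisible subgroup. Then $G$ contains a nontrivial divisible subgroup.
   Context: $Z(G)$ denotes the center of $G$. A group is divisible if every element has an $n$-th root in it for every integer $n\ge1$. *)

(* Defs.v *)
(* abstract (possibly infinite) groups, since MathComp's
   fingroup only covers finite groups (where divisible subgroups are trivial). *)
From Stdlib Require Import Arith.

Set Implicit Arguments.

Record group := Group {
  gcar :> Type;
  gmul : gcar -> gcar -> gcar;
  gone : gcar;
  ginv : gcar -> gcar;
  gmulA : forall x y z, gmul x (gmul y z) = gmul (gmul x y) z;
  gmul1 : forall x, gmul gone x = x;
  gmulV : forall x, gmul (ginv x) x = gone
}.

Arguments gmul {g} _ _.
Arguments gone {g}.
Arguments ginv {g} _.

Fixpoint gpow {G : group} (x : G) (n : nat) : G :=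
  match n with
  | O => gone
  | S m => gmul x (gpow x m)
  end.

Definition is_subgroup {G : group} (S : G -> Prop) : Prop :=
  S gone /\ (forall x y, S x -> S y -> S (gmul x y)) /\
  (forall x, S x -> S (ginv x)).

Definition nontrivial {G : group} (S : G -> Prop) : Prop :=
  exists x, S x /\ x <> gone.

Definition divisible {G : group} (S : G -> Prop) : Prop :=
  forall x, S x -> forall n, 1 <= n -> exists y, S y /\ gpow y n = x.

Definition has_nontrivial_divisible_subgroup (G : group) : Prop :=
  exists S : G -> Prop, is_subgroup S /\ divisible S /\ nontrivial S.

Definition center (G : group) : G -> Prop :=
  fun x => forall y, gmul x y = gmul y x.

Definition comm {G : group} (x y : G) : G :=
  gmul (ginv x) (gmul (ginv y) (gmul x y)).

Definition generated {G : group} (A : G -> Prop) : G -> Prop :=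
  fun x => forall S : G -> Prop, is_subgroup S -> (forall a, A a -> S a) -> S x.

Fixpoint lower_central {G : group} (i : nat) : G -> Prop :=
  match i with
  | O => fun _ => True
  | S j => generated (fun z => exists x y, lower_central j x /\ z = comm x y)
  end.

Definition nilpotent (G : group) : Prop :=
  exists c, forall x : G, lower_central c x -> x = gone.

Definition is_hom {G H : group} (f : G -> H) : Prop :=
  forall x y, f (gmul x y) = gmul (f x) (f y).

(* The quotient G/Z(G) is represented (up to isomorphism) by a group Q
   together with a surjective homomorphism G -> Q whose kernel is Z(G). *)
Definition is_quotient_by_center {G Q : group} (pi : G -> Q) : Prop :=
  is_hom pi /\ (forall q : Q, exists g, pi g = q) /\
  (forall g, pi g = gone <-> center G g).

(* Main.v *)
Require Import Defs.
From Stdlib Require Import Classical Arith.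

Section GL.
Variable G : group.
Implicit Types x y z a b c : G.

Lemma mulgV' x : gmul x (ginv x) = gone.
Proof.
  rewrite <- (gmul1 _ (gmul x (ginv x))).
  rewrite <- (gmulV _ (ginv x)) at 1.
  rewrite <- gmulA. rewrite (gmulA _ (ginv x) x (ginv x)). rewrite gmulV, gmul1.
  apply gmulV.
Qed.

Lemma mulg1' x : gmul x gone = x.
Proof. rewrite <- (gmulV _ x), gmulA, mulgV', gmul1; reflexivity. Qed.

Lemma lcancel a x y : gmul a x = gmul a y -> x = y.
Proof.
  intro H. rewrite <- (gmul1 _ x), <- (gmul1 _ y), <- (gmulV _ a), <- !gmulA, H.
  reflexivity.
Qed.

Lemma inv_uniq a b : gmul a b = gone -> a = ginv b.
Proof.
  intro H. rewrite <- (mulg1' a), <- (mulgV' b), gmulA, H, gmul1. reflexivity.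
Qed.

Lemma commE x y : gmul (gmul y x) (comm x y) = gmul x y.
Proof.
  unfold comm. rewrite <- gmulA, (gmulA _ x (ginv x)), mulgV', gmul1.
  rewrite gmulA, mulgV', gmul1. reflexivity.
Qed.

Lemma comm_uniq x y z : gmul (gmul y x) z = gmul x y -> z = comm x y.
Proof. intro H. apply (lcancel (gmul y x)). rewrite H, commE. reflexivity. Qed.

Lemma comm1E x y : comm x y = gone <-> gmul x y = gmul y x.
Proof.
  split; intro H.
  - rewrite <- commE, H, mulg1'. reflexivity.
  - symmetry. apply comm_uniq. rewrite mulg1'. symmetry; exact H.
Qed.

Lemma comm_x1 x : comm x gone = gone.
Proof. apply comm1E. rewrite mulg1', gmul1. reflexivity. Qed.

Lemma comm_1y y : comm gone y = gone.
Proof. apply comm1E. rewrite mulg1', gmul1. reflexivity. Qed.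

Lemma comm_inv x y : comm x y = ginv (comm y x).
Proof.
  apply inv_uniq. apply (lcancel (gmul y x)).
  rewrite gmulA, commE, commE, mulg1'. reflexivity.
Qed.

Lemma comm_mul h1 h2 y :
  gmul h2 (comm h1 y) = gmul (comm h1 y) h2 ->
  comm (gmul h1 h2) y = gmul (comm h1 y) (comm h2 y).
Proof.
  intro Hc. symmetry. apply comm_uniq.
  rewrite !gmulA. rewrite <- (gmulA _ (gmul y h1) h2), Hc.
  rewrite gmulA, commE. rewrite <- !gmulA. rewrite (gmulA _ y h2), commE.
  reflexivity.
Qed.

Lemma comm_central h z y : (forall w, gmul z w = gmul w z) ->
  comm (gmul h z) y = comm h y.
Proof.
  intro Hz. symmetry. apply comm_uniq.
  rewrite !gmulA. rewrite <- (gmulA _ (gmul y h) z), Hz, gmulA, commE.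
  rewrite <- !gmulA, (Hz y). reflexivity.
Qed.

Lemma commute_pow a c m : gmul a c = gmul c a ->
  gmul (gpow a m) c = gmul c (gpow a m).
Proof.
  intro H. induction m; simpl.
  - rewrite gmul1, mulg1'. reflexivity.
  - rewrite <- gmulA, IHm, gmulA, H, <- gmulA. reflexivity.
Qed.

Lemma comm_pow k y m :
  gmul k (comm k y) = gmul (comm k y) k ->
  comm (gpow k m) y = gpow (comm k y) m.
Proof.
  intro H. induction m; simpl.
  - apply comm_1y.
  - rewrite comm_mul, IHm. reflexivity. apply commute_pow. exact H.
Qed.
End GL.

Lemma hom1 (G Q : group) (f : G -> Q) : is_hom f -> f gone = gone.
Proof.
  intro Hf. apply (@lcancel Q (f gone)). rewrite <- Hf, gmul1, mulg1'. reflexivity.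
Qed.

Lemma hominv (G Q : group) (f : G -> Q) x : is_hom f -> f (ginv x) = ginv (f x).
Proof.
  intro Hf. apply inv_uniq. rewrite <- Hf, gmulV. apply hom1; auto.
Qed.

Lemma hompow (G Q : group) (f : G -> Q) x n : is_hom f -> f (gpow x n) = gpow (f x) n.
Proof.
  intro Hf. induction n; simpl. apply hom1; auto. rewrite Hf, IHn. reflexivity.
Qed.

Lemma comm_lc (G : group) i (h y : G) : lower_central i y -> lower_central (S i) (comm h y).
Proof.
  intros Hy. simpl. intros Sg [S1 [SM SI]] Hgen.
  rewrite comm_inv. apply SI. apply Hgen. exists y, h. split; auto.
Qed.

Theorem mainTheorem3 (G : group) (Q : group) (pi : G -> Q) :
  nilpotent G ->
  is_quotient_by_center pi ->
  has_nontrivial_divisible_subgroup Q ->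
  has_nontrivial_divisible_subgroup G.
Proof.
  intros [c Hc] [Hhom [Hsurj Hker]] [D [[D1 [DM DI]] [Ddiv [d [Dd dn1]]]]].
  set (P := fun i => exists h y, D (pi h) /\ lower_central i y /\ comm h y <> gone).
  assert (P0 : P 0).
  { destruct (Hsurj d) as [h Hh]. subst d.
    assert (~ center G h) by (intro C; apply dn1; apply Hker; exact C).
    unfold center in H. apply not_all_ex_not in H. destruct H as [y Hy].
    exists h, y. repeat split; auto. intro E; apply Hy; apply comm1E; exact E. }
  assert (Pc : ~ P c).
  { intros [h [y [_ [Hy Hn]]]]. apply Hc in Hy. subst y. apply Hn, comm_x1. }
  assert (Hi : exists i, P i /\ ~ P (S i)).
  { apply NNPP. intro N.
    assert (forall i, P i) by (induction i; auto; apply NNPP; intro N2; apply N; eauto).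
    auto. }
  destruct Hi as [i [Pi nPi]].
  assert (Hcm : forall h w, D (pi h) -> lower_central (S i) w -> gmul h w = gmul w h).
  { intros h w Hh Hw. apply comm1E. apply NNPP. intro N. apply nPi. exists h, w; auto. }
  destruct Pi as [h0 [y [Dh0 [Hy Hn0]]]].
  assert (Hmul : forall h1 h2, D (pi h2) ->
    comm (gmul h1 h2) y = gmul (comm h1 y) (comm h2 y)).
  { intros h1 h2 H2. apply comm_mul. apply Hcm; auto. apply comm_lc; auto. }
  exists (fun g => exists h, D (pi h) /\ g = comm h y).
  split; [|split].
  - split; [|split].
    + exists gone. rewrite hom1 by auto. split; auto. symmetry; apply comm_1y.
    + intros a b [h1 [D1' ->]] [h2 [D2' ->]]. exists (gmul h1 h2). split.
      rewrite Hhom; auto. rewrite Hmul; auto.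
    + intros a [h [Dh ->]]. exists (ginv h).
      assert (Di : D (pi (ginv h))) by (rewrite hominv; auto).
      split; auto. symmetry. apply inv_uniq. rewrite <- Hmul by auto.
      rewrite gmulV. apply comm_1y.
  - intros g [h [Dh ->]] n Hn. destruct (Ddiv _ Dh n Hn) as [e [De He]].
    destruct (Hsurj e) as [k Hk]. subst e.
    exists (comm k y). split. exists k; auto.
    rewrite <- comm_pow.
    2:{ apply Hcm; auto. apply comm_lc; auto. }
    assert (E : gpow k n = gmul h (gmul (ginv h) (gpow k n))).
    { rewrite gmulA, mulgV', gmul1. reflexivity. }
    rewrite E. apply comm_central. apply Hker.
    rewrite Hhom, hominv, hompow, He, gmulV by auto. reflexivity.
  - exists (comm h0 y). split; auto. exists h0; auto.
Qed.
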